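(* Let $\mathbf{B}$ be a binomial ring, $n\ge0$, and $X$ a finite set. In the category $\mathbb{Q}\otimes_{\mathbb Z}\mathfrak{Laby}^n$, $$I_X=\sum_{S}\frac{1}{\deg S}\,S,$$ where $S$ ranges over the pure mazes $X\to X$ consisting, for each $x\in X$, of $d_x\ge1$ passages $x\xrightarrow1x$, with $\sum_xd_x=n$, and $\deg S=\prod_xd_x!$.
   Context: Binomial ring: commutative unital, torsion-free, $\binom ak\in\mathbf{B}$ for $a\in\mathbf{B}$, $k\ge0$. A passage $p\colon x\to y$ carries label $\overline p\in\mathbf{B}$; a maze $P\colon X\to Y$ between finite sets is a finite multi-set of passages with every element of $X$ a source and of $Y$ a target; $I_X=\{x\xrightarrow1x:x\in X\}$. $\mathfrak{Laby}$: objects formal finite direct sums of finite sets; morphisms generated by mazes modulo $P\cup\{x\xrightarrow0y\}=0$ and $P\cup\{x\xrightarrow{a+b}y\}=P\cup\{x\xrightarrow ay\}+P\cup\{x\xrightarrow by\}+P\cup\{x\xrightarrow ay,x\xrightarrow by\}$; composition $P\circ Q=\sum_{U\sqsubseteq P\boxtimes Q}U$ ($U$ a sub-multi-set of composable pairs using every passage occurrence of $P$ and $Q$, read as maze with passages $x\xrightarrow{\overline p\overline q}z$). $\mathfrak{Laby}_n$: quotient by $P=0$ if $|P|>n$ and $P=\sum_d\prod_p\binom{\overline p}{d_p}I_d$ ($d_p\ge1$ on passage occurrences $p$; $I_d$ has $d_p$ label-$1$ passages from source to target of $p$). $a\boxdot P$: all labels multiplied by $a\in\mathbb{Q}\otimes\mathbf{B}$.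 $\mathfrak{Laby}^n$: image of $\mathfrak{Laby}_n$ in $\mathbb{Q}\otimes_{\mathbb Z}\mathfrak{Laby}_n$ modulo the ideal generated by all $a^nP-a\boxdot P$, $a\in\mathbb{Q}\otimes\mathbf{B}$. *)

(* Defs.v *)
From HB Require Import structures.
From mathcomp Require Import all_boot all_order all_algebra.
Set Implicit Arguments. Unset Strict Implicit. Unset Printing Implicit Defensive.
Import Order.TTheory GRing.Theory Num.Theory.
Local Open Scope ring_scope.

(* B : the binomial ring; K : a concrete model of Q (x)_Z B, given by an
   injective ring map iota : B -> K, a Q-algebra structure qs : rat -> K,
   and the fact that every element of K is iota b / (m+1). *)

Section Laby.
Variables (B K : comPzRingType) (iota : {rmorphism B -> K})
          (qs : {rmorphism rat -> K}) (n : nat).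

Definition src {X Y : Type} (p : X * Y * B) : X := p.1.1.
Definition tgt {X Y : Type} (p : X * Y * B) : Y := p.1.2.
Definition lab {X Y : Type} (p : X * Y * B) : B := p.2.

(* A maze X -> Y is a finite multiset of passages (a seq, considered up to
   permutation) in which every x is a source and every y is a target. *)
Definition is_maze {X Y : finType} (P : seq (X * Y * B)) : bool :=
  [forall x : X, has (fun p => src p == x) P] &&
  [forall y : Y, has (fun p => tgt p == y) P].

Definition comb (X Y : finType) := seq (K * seq (X * Y * B)).

Definition coef {X Y : finType} (r : comb X Y) (P : seq (X * Y * B)) : K :=
  \sum_(e <- r | perm_eq e.2 P) e.1.

Definition cscale {X Y : finType} (c : K) (r : comb X Y) : comb X Y :=
  [seq (c * e.1, e.2) | e <- r].

(* composition P o Q of mazes P : X -> Y, Q : Y -> Z (diagrammatic order):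
   sum over sets U of composable pairs of passage occurrences using every
   occurrence of P and of Q. *)
Section Comp.
Variables (X Y Z : finType) (P : seq (X * Y * B)) (Q : seq (Y * Z * B)).
Let tP := in_tuple P.
Let tQ := in_tuple Q.
Definition comp_valid (U : {set 'I_(size P) * 'I_(size Q)}) : bool :=
  [forall u in U, tgt (tnth tP u.1) == src (tnth tQ u.2)] &&
  [forall i, exists j, (i, j) \in U] && [forall j, exists i, (i, j) \in U].
Definition comp_maze (U : {set 'I_(size P) * 'I_(size Q)}) : seq (X * Z * B) :=
  [seq (src (tnth tP u.1), tgt (tnth tQ u.2), lab (tnth tP u.1) * lab (tnth tQ u.2))
  | u <- enum U].
Definition comp : comb X Z :=
  [seq (1, comp_maze U) | U <- enum {set 'I_(size P) * 'I_(size Q)} & comp_valid U].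
End Comp.

Definition lcomp {X Y Z : finType} (P : seq (X * Y * B)) (r : comb Y Z) : comb X Z :=
  flatten [seq cscale e.1 (comp P e.2) | e <- r].
Definition rcomp {X Y Z : finType} (r : comb X Y) (Q : seq (Y * Z * B)) : comb X Z :=
  flatten [seq cscale e.1 (comp e.2 Q) | e <- r].

Definition binomK (a : K) (k : nat) : K :=
  qs (k`!%:R)^-1 * \prod_(i < k) (a - i%:R).

(* Expansion  sum_d prod_p binom(f(label p), d_p) I_d, d_p >= 1; the terms
   with sum d_p > n vanish in Laby_n, so d_p <= n is enough. *)
Section Expand.
Variables (X Y : finType) (f : B -> K) (P : seq (X * Y * B)).
Let tP := in_tuple P.
Definition Id_maze (d : {ffun 'I_(size P) -> 'I_n.+1}) : seq (X * Y * B) :=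
  flatten [seq nseq (d i) (src (tnth tP i), tgt (tnth tP i), 1) | i <- enum 'I_(size P)].
Definition expand : comb X Y :=
  [seq (\prod_i binomK (f (lab (tnth tP i))) (d i), Id_maze d)
  | d : {ffun 'I_(size P) -> 'I_n.+1} <- enum {ffun 'I_(size P) -> 'I_n.+1} & [forall i, (0 < d i)%N]].
End Expand.

(* LI X Y r : r is zero in Hom_{Q (x) Laby^n}(X, Y), i.e. r lies in the
   (K-linear, composition-closed) ideal generated by all defining relations
   of Laby, Laby_n and Laby^n. *)
Inductive LI : forall X Y : finType, comb X Y -> Prop :=
| LI_ext (X Y : finType) (r s : comb X Y) :
    LI r -> (forall P, coef r P = coef s P) -> LI s
| LI_nil (X Y : finType) : @LI X Y [::]
| LI_add (X Y : finType) (r s : comb X Y) : LI r -> LI s -> LI (r ++ s)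
| LI_scale (X Y : finType) (c : K) (r : comb X Y) : LI r -> LI (cscale c r)
| LI_compl (X Y Z : finType) (P : seq (X * Y * B)) (r : comb Y Z) :
    is_maze P -> LI r -> LI (lcomp P r)
| LI_compr (X Y Z : finType) (r : comb X Y) (Q : seq (Y * Z * B)) :
    is_maze Q -> LI r -> LI (rcomp r Q)
| LI_zero (X Y : finType) (P : seq (X * Y * B)) x y :
    is_maze ((x, y, 0) :: P) -> LI [:: (1, (x, y, 0) :: P)]
| LI_addlab (X Y : finType) (P : seq (X * Y * B)) x y a b :
    is_maze ((x, y, a + b) :: P) ->
    LI [:: (1, (x, y, a + b) :: P); (-1, (x, y, a) :: P);
           (-1, (x, y, b) :: P); (-1, (x, y, a) :: (x, y, b) :: P)]
| LI_big (X Y : finType) (P : seq (X * Y * B)) :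
    is_maze P -> (n < size P)%N -> LI [:: (1, P)]
| LI_binom (X Y : finType) (P : seq (X * Y * B)) :
    is_maze P -> LI ((1, P) :: cscale (-1) (expand iota P))
| LI_hom (X Y : finType) (P : seq (X * Y * B)) (a : K) :
    is_maze P -> LI ((a ^+ n, P) :: cscale (-1) (expand (fun b => a * iota b) P)).

Definition Leq {X Y : finType} (r s : comb X Y) : Prop := LI (r ++ cscale (-1) s).

End Laby.

Definition idmaze (B : comPzRingType) (X : finType) : seq (X * X * B) :=
  [seq (x, x, 1) | x <- enum X].
Definition pure_degs (X : finType) (n : nat) : seq {ffun X -> 'I_n.+1} :=
  [seq d : {ffun X -> 'I_n.+1} <- enum {ffun X -> 'I_n.+1} |
    [forall x, (0 < d x)%N] && ((\sum_x (d x : nat))%N == n)].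
Definition pure_maze (B : comPzRingType) (X : finType) (n : nat)
  (d : {ffun X -> 'I_n.+1}) : seq (X * X * B) :=
  flatten [seq nseq (d x) (x, x, 1) | x <- enum X].
Definition pure_deg (X : finType) (n : nat) (d : {ffun X -> 'I_n.+1}) : nat :=
  (\prod_x (d x)`!)%N.

(* Main.v *)
Require Import Defs.
From mathcomp Require Import all_boot all_order all_algebra.
From mathcomp Require Import ring.
Set Implicit Arguments. Unset Strict Implicit. Unset Printing Implicit Defensive.
Import Order.TTheory GRing.Theory Num.Theory.
Local Open Scope ring_scope.

Definition Esum (n : nat) (f : nat -> rat) : rat :=
  \sum_(0 <= j < n.+1) (-1)^+j * 'C(n,j)%:R * f j.

Lemma EsumS n f : Esum n.+1 f = Esum n f - Esum n (fun j => f j.+1).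
Proof.
rewrite /Esum big_nat_recl // [in X in _ = X - _]big_nat_recl //.
have -> : \sum_(0 <= i < n.+1) (-1) ^+ i.+1 * ('C(n.+1, i.+1))%:R * f i.+1
   = \sum_(0 <= i < n.+1) (-1) ^+ i.+1 * ('C(n, i.+1))%:R * f i.+1
     - \sum_(0 <= i < n.+1) (-1) ^+ i * ('C(n, i))%:R * f i.+1.
  rewrite -sumrB; apply: eq_bigr => i _.
  by rewrite binS natrD exprS; ring.
rewrite [in X in _ + (X - _) = _]big_nat_recr //=.
rewrite (@bin_small n n.+1) // mulr0 mul0r addr0.
have E : 'C(n.+1, 0) = 'C(n, 0) by rewrite !bin0.
by rewrite E addrA.
Qed.

Lemma EsumD n f g : Esum n (fun j => f j + g j) = Esum n f + Esum n g.
Proof. by rewrite /Esum -big_split; apply: eq_bigr => i _; rewrite mulrDr. Qed.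

Lemma Esum_ext n f g : (forall j, f j = g j) -> Esum n f = Esum n g.
Proof. by move=> fg; apply: eq_bigr => i _; rewrite fg. Qed.

Lemma Esum_bin n k : Esum n (fun j => ('C(j,k))%:R) = (-1)^+n * (n == k)%:R.
Proof.
elim: n k => [|n IH] k.
  by rewrite /Esum big_nat1 !bin0n expr0 !mul1r; case: k.
rewrite EsumS; case: k => [|k].
  rewrite (@Esum_ext n (fun j => ('C(j.+1, 0))%:R) (fun j => ('C(j, 0))%:R)); last by move=> j; rewrite !bin0.
  by rewrite subrr /= mulr0.
rewrite (@Esum_ext n (fun j => ('C(j.+1, k.+1))%:R)
   (fun j => ('C(j, k.+1))%:R + ('C(j, k))%:R)); last by move=> j; rewrite binS natrD.
rewrite EsumD IH IH eqSS exprS; ring.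
Qed.

Definition Bprod (k : nat) : {poly rat} := \prod_(i < k) ('X - (i%:R)%:P).
Definition Bpoly (k : nat) : {poly rat} := (k`!%:R)^-1 *: Bprod k.

Lemma fact_neq0 k : (k`!%:R : rat) != 0.
Proof. by rewrite pnatr_eq0 -lt0n fact_gt0. Qed.

Lemma size_index_enum_ord k : size (index_enum 'I_k) = k.
Proof. by rewrite /index_enum unlock -enumT -cardT card_ord. Qed.

Lemma Bprod_size k : size (Bprod k) = k.+1.
Proof. by rewrite /Bprod size_prod_XsubC size_index_enum_ord. Qed.

Lemma Bprod_lead k : lead_coef (Bprod k) = 1.
Proof. by have := monic_prod_XsubC (index_enum 'I_k) xpredT (fun i : 'I_k => (i%:R : rat)); rewrite monicE => /eqP. Qed.

Lemma Bprod_eval k j : (Bprod k).[j%:R] = (j ^_ k)%:R.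
Proof.
rewrite /Bprod horner_prod.
elim: k => [|k IH]; first by rewrite big_ord0 ffactn0.
rewrite big_ord_recr /= IH hornerXsubC ffactnSr natrM.
have [le|lt] := leqP k j; first by rewrite natrB.
by rewrite ffact_small // mulr0n !mul0r.
Qed.

Lemma Bpoly_size k : size (Bpoly k) = k.+1.
Proof. by rewrite /Bpoly size_scale ?Bprod_size // invr_eq0 fact_neq0. Qed.

Lemma Bpoly_lead k : lead_coef (Bpoly k) = (k`!%:R)^-1.
Proof. by rewrite /Bpoly lead_coefZ Bprod_lead mulr1. Qed.

Lemma Bpoly_coef k : (Bpoly k)`_k = (k`!%:R)^-1.
Proof. by rewrite -Bpoly_lead lead_coefE Bpoly_size. Qed.

Lemma Bpoly_eval k j : (Bpoly k).[j%:R] = ('C(j,k))%:R.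
Proof.
rewrite /Bpoly hornerZ Bprod_eval -bin_ffact natrM mulrC mulrK //.
by rewrite unitfE fact_neq0.
Qed.

Lemma size_dec (q : {poly rat}) m : (size q <= m.+2)%N -> q`_m.+1 = 0 -> (size q <= m.+1)%N.
Proof.
move=> sq q0; apply/leq_sizeP => j; rewrite leq_eqVlt => /orP[/eqP <- //|hj].
by rewrite nth_default // (leq_trans sq).
Qed.

Lemma expand_binom m (p : {poly rat}) : (size p <= m.+1)%N ->
  exists c : nat -> rat, c m = m`!%:R * p`_m /\
    forall j : nat, p.[j%:R] = \sum_(0 <= k < m.+1) c k * ('C(j,k))%:R.
Proof.
elim: m p => [|m IH] p sp.
  exists (fun _ => p`_0); split; first by rewrite mul1r.
  by move=> j; rewrite big_nat1 bin0 mulr1 {1}(size1_polyC sp) hornerC.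
pose a := (m.+1)`!%:R * p`_m.+1.
pose q := p - a *: Bpoly m.+1.
have sq : (size q <= m.+1)%N.
  apply: size_dec.
    rewrite /q (leq_trans (size_add _ _)) // geq_max sp size_opp.
    by rewrite (leq_trans (size_scale_leq _ _)) // Bpoly_size.
  rewrite /q coefB coefZ Bpoly_coef /a mulrAC mulfV ?fact_neq0 // mul1r subrr //.
have [c [cm ce]] := IH q sq.
exists (fun k => if k == m.+1 then a else c k); split; first by rewrite eqxx.
move=> j; rewrite big_nat_recr //= eqxx.
have -> : p.[j%:R] = q.[j%:R] + a * (Bpoly m.+1).[j%:R].
  by rewrite /q hornerD hornerN hornerZ subrK.
rewrite Bpoly_eval ce; congr (_ + _).
by apply: eq_big_nat => k /andP[_ hk]; rewrite ltn_eqF.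
Qed.

Definition wr (n j : nat) : rat := (-1)^+n * (-1)^+j * 'C(n,j)%:R / n`!%:R.

Lemma key n (p : {poly rat}) : (size p <= n.+1)%N ->
  \sum_(0 <= j < n.+1) wr n j * p.[j%:R] = p`_n.
Proof.
move=> sp; have [c [cn ce]] := expand_binom sp.
under eq_bigr => j _ do rewrite ce mulr_sumr.
rewrite exchange_big /=.
have E : forall k, \sum_(0 <= i < n.+1) wr n i * (c k * ('C(i, k))%:R)
   = c k * ((-1)^+n / n`!%:R * Esum n (fun j => ('C(j,k))%:R)).
  move=> k; rewrite /Esum !mulr_sumr; apply: eq_bigr => i _; rewrite /wr; ring.
under eq_bigr => k _ do rewrite E Esum_bin.
rewrite big_nat_recr //= big1_seq ?add0r; last first.
  move=> k; rewrite mem_index_iota => /andP[_ hk].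
  by rewrite eq_sym ltn_eqF // mulr0 !mulr0.
rewrite eqxx mulr1 cn.
have s2 : (-1)^+n * (-1)^+n = 1 :> rat by rewrite -exprMn mulrNN mulr1 expr1n.
rewrite [_ / _ * _]mulrAC s2 mul1r mulrAC mulfV ?fact_neq0 // mul1r.
done.
Qed.

Lemma prodB (I : Type) (s : seq I) (F : I -> nat) :
  size (\prod_(i <- s) Bpoly (F i)) = (\sum_(i <- s) F i)%N.+1 /\
  lead_coef (\prod_(i <- s) Bpoly (F i)) = \prod_(i <- s) ((F i)`!%:R)^-1.
Proof.
elim: s => [|x s [IHs IHl]]; first by rewrite !big_nil size_poly1 lead_coef1.
have nz1 : Bpoly (F x) != 0 by rewrite -size_poly_eq0 Bpoly_size.
have nz2 : \prod_(i <- s) Bpoly (F i) != 0 by rewrite -size_poly_eq0 IHs.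
rewrite !big_cons size_mul // lead_coefM IHs IHl Bpoly_size Bpoly_lead; split => //.
by rewrite addSn addnS.
Qed.

Lemma prodB_coef (I : Type) (s : seq I) (F : I -> nat) n :
  (\sum_(i <- s) F i <= n)%N ->
  (\prod_(i <- s) Bpoly (F i))`_n =
  if (\sum_(i <- s) F i == n)%N then \prod_(i <- s) ((F i)`!%:R)^-1 else 0.
Proof.
have [sz ld] := prodB s F.
move=> le; case: eqP => [e|ne].
  by rewrite -ld lead_coefE sz e.
by rewrite nth_default // sz ltn_neqAle le andbT; apply/eqP.
Qed.

Section Mz.
Variables (B K : comPzRingType) (iota : {rmorphism B -> K}) (qs : {rmorphism rat -> K}) (n : nat).

Lemma coef_cat (X Y : finType) (r s : comb B K X Y) P :
  coef (r ++ s) P = coef r P + coef s P.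
Proof. by rewrite /coef big_cat. Qed.

Lemma coef_scale (X Y : finType) c (r : comb B K X Y) P :
  coef (cscale c r) P = c * coef r P.
Proof. by rewrite /coef /cscale big_map mulr_sumr. Qed.

Lemma coef_cons (X Y : finType) e (r : comb B K X Y) P :
  coef (e :: r) P = (if perm_eq e.2 P then e.1 else 0) + coef r P.
Proof. by rewrite /coef big_cons; case: ifP; rewrite ?add0r. Qed.

Lemma coef_nil (X Y : finType) P : coef ([::] : comb B K X Y) P = 0.
Proof. by rewrite /coef big_nil. Qed.

Lemma coef_flatten (X Y : finType) (L : seq (comb B K X Y)) P :
  coef (flatten L) P = \sum_(r <- L) coef r P.
Proof.
elim: L => [|r L IH]; first by rewrite big_nil coef_nil.
by rewrite /= coef_cat IH big_cons.
Qed.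

Lemma coef_map (X Y : finType) (T : Type) (s : seq T) (f : T -> K)
   (g : T -> seq (X * Y * B)) P :
  coef [seq (f x, g x) | x <- s] P = \sum_(x <- s | perm_eq (g x) P) f x.
Proof. by rewrite /coef big_map. Qed.

Lemma LI_flatten_map (X Y : finType) (T : Type) (s : seq T) (F : T -> comb B K X Y) :
  (forall x, LI iota qs n (F x)) -> LI iota qs n (flatten (map F s)).
Proof.
move=> h; elim: s => [|x s IH] /=; first exact: LI_nil.
exact: LI_add.
Qed.

Lemma LI_bigs (X Y : finType) (s : comb B K X Y) :
  (forall e, e \in s -> is_maze e.2 && (n < size e.2)%N) -> LI iota qs n s.
Proof.
elim: s => [|e s IH] h; first exact: LI_nil.
have -> : e :: s = [:: e] ++ s by [].
apply: LI_add; last by apply: IH => e' he'; apply: h; rewrite inE he' orbT.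
have /andP[m b] := h e (mem_head _ _).
have := LI_scale e.1 (LI_big iota qs m b).
by rewrite /cscale /= mulr1; case: e {h m b}.
Qed.

End Mz.

Lemma enum_index (T : finType) : enum T = index_enum T.
Proof. by rewrite /index_enum unlock enumT. Qed.

Section Idm.
Variables (B : comPzRingType) (X : finType) (n : nat).

Definition ex (i : 'I_(size (idmaze B X))) : X := (tnth (in_tuple (idmaze B X)) i).1.1.

Lemma tnth_idmaze i : tnth (in_tuple (idmaze B X)) i = (ex i, ex i, 1).
Proof. by rewrite /ex; case/mapP: (mem_tnth i (in_tuple (idmaze B X))) => x _ ->. Qed.

Lemma size_idmaze : size (idmaze B X) = size (enum X).
Proof. by rewrite size_map. Qed.

Lemma ex_nth (x0 : X) i : ex i = nth x0 (enum X) i.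
Proof.
rewrite /ex (tnth_nth (x0, x0, 1)) /= /idmaze (nth_map x0) //.
by rewrite -size_idmaze.
Qed.

Lemma rx_lt (x : X) : (index x (enum X) < size (idmaze B X))%N.
Proof. by rewrite size_idmaze index_mem mem_enum. Qed.

Definition rx (x : X) : 'I_(size (idmaze B X)) := Ordinal (rx_lt x).

Lemma ex_rx x : ex (rx x) = x.
Proof. by rewrite (ex_nth x) /= nth_index // mem_enum. Qed.

Lemma rx_ex i : rx (ex i) = i.
Proof.
apply: val_inj => /=; rewrite (ex_nth (ex i)) index_uniq ?enum_uniq //.
by rewrite -size_idmaze.
Qed.

Lemma ex_bij : bijective ex.
Proof. by exists rx; [exact: rx_ex | exact: ex_rx]. Qed.

Lemma map_ex : [seq ex i | i <- enum 'I_(size (idmaze B X))] = enum X.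
Proof.
have := map_tnth_enum (in_tuple (idmaze B X)).
move/(congr1 (map (fun t : X * X * B => t.1.1))).
rewrite -map_comp /= => ->; rewrite /idmaze -map_comp; exact: map_id.
Qed.

Lemma idmaze_maze : is_maze (idmaze B X).
Proof.
apply/andP; split; apply/forallP => x; apply/hasP; exists (x, x, 1) => //;
  by apply: map_f; rewrite mem_enum.
Qed.

Lemma Id_mazeE (d : {ffun 'I_(size (idmaze B X)) -> 'I_n.+1}) :
  Id_maze d = flatten [seq nseq (d i) (ex i, ex i, 1) | i <- enum 'I_(size (idmaze B X))].
Proof. by rewrite /Id_maze; congr flatten; apply: eq_map => i; rewrite tnth_idmaze. Qed.

Lemma size_Id_maze (d : {ffun 'I_(size (idmaze B X)) -> 'I_n.+1}) :
  size (Id_maze d) = (\sum_i (d i : nat))%N.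
Proof.
rewrite Id_mazeE size_flatten sumnE /shape -map_comp big_map enum_index.
by apply: eq_bigr => i _; rewrite /= size_nseq.
Qed.

Lemma Id_maze_maze (d : {ffun 'I_(size (idmaze B X)) -> 'I_n.+1}) :
  [forall i, (0 < d i)%N] -> is_maze (Id_maze d).
Proof.
move=> /forallP pd.
have mx : forall x : X, (x, x, 1) \in Id_maze d.
  move=> x; rewrite Id_mazeE; apply/flatten_mapP; exists (rx x); first by rewrite mem_enum.
  by rewrite mem_nseq pd ex_rx eqxx.
apply/andP; split; apply/forallP => x; apply/hasP; exists (x, x, 1) => //.
Qed.

Definition hf (d : {ffun X -> 'I_n.+1}) : {ffun 'I_(size (idmaze B X)) -> 'I_n.+1} :=
  [ffun i => d (ex i)].
Definition hg (d : {ffun 'I_(size (idmaze B X)) -> 'I_n.+1}) : {ffun X -> 'I_n.+1} :=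
  [ffun x => d (rx x)].

Lemma hf_bij : bijective hf.
Proof.
exists hg => d; apply/ffunP => z; rewrite !ffunE; first by rewrite ex_rx.
by rewrite rx_ex.
Qed.

Lemma Id_maze_hf d : Id_maze (hf d) = pure_maze B d.
Proof.
rewrite Id_mazeE /pure_maze -map_ex -[X in _ = flatten X]map_comp; congr flatten.
by apply: eq_map => i; rewrite /= ffunE.
Qed.

End Idm.

Lemma binomK_qs (K : comPzRingType) (qs : {rmorphism rat -> K}) (x : rat) k :
  binomK qs (qs x) k = qs ((Bpoly k).[x]).
Proof.
rewrite /binomK /Bpoly hornerZ /Bprod horner_prod rmorphM rmorph_prod; congr (_ * _).
by apply: eq_bigr => i _; rewrite hornerXsubC rmorphB rmorph_nat.
Qed.

Lemma coef_expand (B K : comPzRingType) (qs : {rmorphism rat -> K}) n (X Y : finType)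
   (f : B -> K) (Q : seq (X * Y * B)) P :
  coef (expand qs n f Q) P =
  \sum_(d <- enum {ffun 'I_(size Q) -> 'I_n.+1} | [forall i, (0 < d i)%N] && perm_eq (Id_maze d) P)
     \prod_i binomK qs (f (lab (tnth (in_tuple Q) i))) (d i).
Proof. by rewrite /expand coef_map big_filter_cond. Qed.

Unset Implicit Arguments.
Set Strict Implicit.

Theorem mainTheorem18
  (B K : comPzRingType) (iota : {rmorphism B -> K}) (qs : {rmorphism rat -> K})
  (B_torsionfree : forall (a : B) (m : nat), a *+ m.+1 = 0 -> a = 0)
  (B_binomial : forall (a : B) (k : nat),
      exists b : B, b *+ k`! = \prod_(i < k) (a - i%:R))
  (iota_inj : injective iota)
  (K_loc : forall k : K, exists (b : B) (m : nat), k * m.+1%:R = iota b)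
  (n : nat) (X : finType) :
  Leq iota qs n [:: (1, idmaze B X)]
    [seq (qs ((pure_deg d)%:R)^-1, pure_maze B d) | d <- pure_degs X n].
Proof.
set I := idmaze B X.
pose a (j : nat) : K := j%:R.
pose w (j : nat) : K := qs (wr n j).
pose Wt (j : nat) (d : {ffun 'I_(size I) -> 'I_n.+1}) : K :=
  \prod_i binomK qs (a j * iota (lab (tnth (in_tuple I) i))) (d i).
pose cb (d : {ffun 'I_(size I) -> 'I_n.+1}) : K := \sum_(0 <= j < n.+1) w j * Wt j d.
pose pos (d : {ffun 'I_(size I) -> 'I_n.+1}) := [forall i, (0 < d i)%N].
pose tot (d : {ffun 'I_(size I) -> 'I_n.+1}) := (\sum_i (d i : nat))%N.
pose hom (j : nat) := ((a j)^+n, I) :: cscale (-1) (expand qs n (fun b => a j * iota b) I).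
pose BIG := [seq (cb d, Id_maze d) | d <- [seq d <- enum {ffun 'I_(size I) -> 'I_n.+1} | pos d && (n < tot d)%N]].
pose S := flatten [seq cscale (w j) (hom j) | j <- index_iota 0 n.+1] ++ BIG.
have LS : LI iota qs n S.
  apply: LI_add.
    apply: LI_flatten_map => j; apply: LI_scale; exact: (LI_hom iota qs n (a j) (idmaze_maze B X)).
  apply: LI_bigs => e /mapP[d]; rewrite mem_filter => /andP[/andP[pd bd] _] -> /=.
  by rewrite Id_maze_maze // size_Id_maze.
apply: (LI_ext LS) => P.
set iP : K := if perm_eq I P then 1 else 0.
pose Q (d : {ffun 'I_(size I) -> 'I_n.+1}) := perm_eq (Id_maze d) P.
have hWt : forall j d, Wt j d = qs ((\prod_i Bpoly (d i)).[j%:R]).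
  move=> j d; rewrite /Wt horner_prod rmorph_prod; apply: eq_bigr => i _.
  rewrite tnth_idmaze /lab /= rmorph1 mulr1 /a -(rmorph_nat qs j) binomK_qs //.
have hw1 : \sum_(0 <= j < n.+1) w j * a j ^+ n = 1.
  transitivity (qs (\sum_(0 <= j < n.+1) wr n j * ('X^n : {poly rat}).[j%:R])).
    rewrite rmorph_sum; apply: eq_bigr => j _.
    by rewrite rmorphM hornerXn rmorphXn rmorph_nat.
  by rewrite key ?size_polyXn // coefXn eqxx rmorph1.
have hcb : forall d, pos d -> (tot d <= n)%N ->
    cb d = if tot d == n then qs (\prod_i ((d i)`!%:R)^-1) else 0.
  move=> d pd td; rewrite /cb.
  rewrite (eq_bigr (fun j => qs (wr n j * (\prod_i Bpoly (d i)).[j%:R]))); last first.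
    by move=> j _; rewrite hWt rmorphM.
  rewrite -rmorph_sum key; last first.
    by have [-> _] := prodB (index_enum 'I_(size I)) (fun i => nat_of_ord (d i)).
  by rewrite prodB_coef //; case: ifP => _; rewrite ?rmorph0.
have e1 : forall j, coef (cscale (w j) (hom j)) P =
    w j * a j ^+ n * iP - \sum_(d <- enum {ffun 'I_(size I) -> 'I_n.+1} | pos d && Q d) w j * Wt j d.
  move=> j; rewrite coef_scale /hom coef_cons coef_scale coef_expand /= mulrDr mulN1r mulrN mulr_sumr /iP.
  by case: ifP => _; rewrite ?mulr1 ?mulr0.
have eS : coef S P = iP -
    \sum_(d <- enum {ffun 'I_(size I) -> 'I_n.+1} | (pos d && Q d) && ~~ (n < tot d)%N) cb d.
  rewrite coef_cat coef_flatten big_map /BIG coef_map big_filter_cond.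
  rewrite (eq_bigr _ (fun j _ => e1 j)) sumrB -mulr_suml hw1 mul1r exchange_big /=.
  rewrite (bigID (fun d => (n < tot d)%N)) /=.
  rewrite (eq_bigl (fun d => (pos d && (n < tot d)%N) && Q d)); last first.
    by move=> d; case: (pos d); case: (Q d); case: (n < tot d)%N.
  have G3 : forall x y z : K, x - (y + z) + y = x - z.
    by move=> x y z; rewrite opprD addrAC addrA addrK.
  exact: G3.
rewrite eS coef_cat coef_cons coef_nil coef_scale coef_map /= addr0 mulN1r.
congr (_ - _).
rewrite (eq_bigr (fun d => if tot d == n then qs (\prod_i ((d i)`!%:R)^-1) else 0)); last first.
  by move=> d /andP[/andP[pd _] hb]; apply: hcb => //; rewrite leqNgt.
rewrite -big_mkcondr /pure_degs big_filter_cond !enum_index.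
rewrite (reindex (hf B (n:=n)) (onW_bij _ (hf_bij B X n))).
have sumX : forall (f : X -> nat), (\sum_x f x)%N = (\sum_i f (@ex B X i))%N.
  by move=> f; rewrite (reindex (@ex B X) (onW_bij _ (ex_bij B X))).
have prodX : forall (f : X -> rat), \prod_x f x = \prod_i f (@ex B X i).
  by move=> f; rewrite (reindex (@ex B X) (onW_bij _ (ex_bij B X))).
have tothf : forall d', tot (hf B d') = (\sum_x (d' x : nat))%N.
  by move=> d'; rewrite sumX /tot; apply: eq_bigr => i _; rewrite ffunE.
have poshf : forall d', pos (hf B d') = [forall x, (0 < d' x)%N].
  move=> d'; apply/forallP/forallP => h x.
    by have := h (rx B x); rewrite ffunE ex_rx.
  by rewrite ffunE.
apply: eq_big => d'.
  rewrite tothf poshf /Q Id_maze_hf.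
  case: eqP => [->|_]; rewrite ?ltnn ?andbF //=.
  by rewrite andbT andbAC.
move=> _; congr (qs _).
rewrite /pure_deg natr_prod -prodfV prodX; apply: eq_bigr => i _.
by rewrite ffunE.
Qed.
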